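(* Let $\Sigma_1,\Sigma_2$ be finite alphabets and $m\subseteq\Sigma_1^*\times\Sigma_2^*$ a string transduction. Then $\mathrm{nd}(m)$ is an mso definable graph transduction if and only if $\mathrm{ed}(m)$ is an mso definable graph transduction and $(\varepsilon,z)\in m$ implies $z=\varepsilon$.
   Context: Graphs over node alphabet $\Sigma$ and edge alphabet $\Gamma$ are triples $(V,E,\mathrm{lab})$, $E\subseteq V\times\Gamma\times V$, $\mathrm{lab}:V\to\Sigma$; $*$ denotes ''unlabelled''. $\mathrm{MSO}(\Sigma,\Gamma)$ is monadic second-order logic with node and node-set variables and atomic formulas $\mathrm{lab}_\sigma(x)$, $\mathrm{edge}_\gamma(x,y)$, $x=y$, $x\in X$. An mso definable graph transduction is a partial function given by a closed domain formula $\varphi_{\mathrm{dom}}$, a finite copy set $C$, node formulas $\varphi^c_\sigma(x)$ and edge formulas $\varphi^{c_1,c_2}_\gamma(x,y)$ over the input logic; on an input $g\models\varphi_{\mathrm{dom}}$ the output has nodes $(u,c)$ for which exactly one $\sigma$ satisfies $g\models\varphi^c_\sigma(u)$ (labelled $\sigma$), and edges $((u,c_1),\gamma,(v,c_2))$ between such nodes iff $g\models\varphi^{c_1,c_2}_\gamma(u,v)$. For $w$ of length $k$: $\mathrm{nd}(w)$ has $k$ nodes labelled by the letters of $w$ with $k-1$ unlabelled successor edges ($\mathrm{nd}(\varepsilon)$ is empty); $\mathrm{ed}(w)$ has $k+1$ unlabelled nodes forming a path whose $k$ edges are labelled by the letters of $w$. For a transduction $m$, $\mathrm{nd}(m)=\{(\mathrm{nd}(w),\mathrm{nd}(z))\mid(w,z)\in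 m\}$ and $\mathrm{ed}(m)=\{(\mathrm{ed}(w),\mathrm{ed}(z))\mid(w,z)\in m\}$. *)

(* Defs.v *)
From mathcomp Require Import all_boot.
Set Implicit Arguments. Unset Strict Implicit. Unset Printing Implicit Defensive.

Record graph (S G : Type) := Graph {
  gV : finType;
  gE : gV -> G -> gV -> bool;
  glab : gV -> S }.
Arguments gV {S G} g.
Arguments gE {S G} g _ _ _.
Arguments glab {S G} g _.

Definition iso (S G : Type) (g h : graph S G) : Prop :=
  exists f : gV g -> gV h, bijective f /\
    (forall v, glab h (f v) = glab g v) /\
    (forall u (c : G) v, gE h (f u) c (f v) = gE g u c v).

Inductive mso (S G : Type) : Type :=
| MLab  of S & nat
| MEdge of G & nat & nat
| MEq   of nat & nat
| MIn   of nat & nat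
| MTrue
| MNot  of mso S G
| MAnd  of mso S G & mso S G
| MOr   of mso S G & mso S G
| MExN  of nat & mso S G
| MAllN of nat & mso S G
| MExS  of nat & mso S G
| MAllS of nat & mso S G.

(* Environments: node variables may be unassigned (None), in which case
   atoms mentioning them are false; set variables default to the empty set. *)
Definition upd (T : Type) (e : nat -> T) (i : nat) (t : T) : nat -> T :=
  fun j => if j == i then t else e j.

Fixpoint sat {S G : Type} (g : graph S G)
  (en : nat -> option (gV g)) (es : nat -> {set gV g}) (phi : mso S G) : Prop :=
  match phi with
  | MLab s x => exists u, en x = Some u /\ glab g u = s
  | MEdge c x y => exists u v, en x = Some u /\ en y = Some v /\ gE g u c v
  | MEq x y => exists u, en x = Some u /\ en y = Some u
  | MIn x X => exists u, en x = Some u /\ u \in es X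
  | MTrue => True
  | MNot p => ~ sat en es p
  | MAnd p q => sat en es p /\ sat en es q
  | MOr p q => sat en es p \/ sat en es q
  | MExN x p => exists u, sat (upd en x (Some u)) es p
  | MAllN x p => forall u, sat (upd en x (Some u)) es p
  | MExS X p => exists A, sat en (upd es X A) p
  | MAllS X p => forall A, sat en (upd es X A) p
  end.
Arguments sat {S G} g en es phi.

Definition sat0 {S G} (g : graph S G) phi := sat g (fun _ => None) (fun _ => set0) phi.
Definition sat1 {S G} (g : graph S G) (u : gV g) phi :=
  sat g (upd (fun _ => None) 0 (Some u)) (fun _ => set0) phi.
Arguments sat1 {S G} g u phi.
Definition sat2 {S G} (g : graph S G) (u v : gV g) phi :=
  sat g (upd (upd (fun _ => None) 0 (Some u)) 1 (Some v)) (fun _ => set0) phi.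
Arguments sat2 {S G} g u v phi.
Arguments sat0 {S G} g phi.

Record mso_trans (S1 G1 S2 G2 : Type) := MsoTrans {
  copies : finType;
  dom_f  : mso S1 G1;
  node_f : copies -> S2 -> mso S1 G1;
  edge_f : copies -> copies -> G2 -> mso S1 G1 }.
Arguments copies {S1 G1 S2 G2} m.
Arguments dom_f {S1 G1 S2 G2} m.
Arguments node_f {S1 G1 S2 G2} m _ _.
Arguments edge_f {S1 G1 S2 G2} m _ _ _.

Definition out_node S1 G1 S2 G2 (t : mso_trans S1 G1 S2 G2) (g : graph S1 G1)
  (u : gV g) (c : copies t) : Prop :=
  exists! s : S2, sat1 g u (node_f t c s).
Arguments out_node {S1 G1 S2 G2} t g u c.

(* h is (isomorphic to) the output graph of t on input g. *)
Definition is_output S1 G1 S2 G2 (t : mso_trans S1 G1 S2 G2) (g : graph S1 G1)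
  (h : graph S2 G2) : Prop :=
  exists f : gV h -> gV g * copies t,
    injective f /\
    (forall u c, out_node t g u c <-> exists v, f v = (u, c)) /\
    (forall v, sat1 g (f v).1 (node_f t (f v).2 (glab h v))) /\
    (forall v1 (c : G2) v2,
        gE h v1 c v2 <-> sat2 g (f v1).1 (f v2).1 (edge_f t (f v1).2 (f v2).2 c)).

Definition mso_definable (S1 G1 : Type) (Sf2 Gf2 : finType)
  (R : graph S1 G1 -> graph Sf2 Gf2 -> Prop) : Prop :=
  exists t : mso_trans S1 G1 Sf2 Gf2,
    forall g h, R g h <-> (sat0 g (dom_f t) /\ is_output t g h).

Definition nd (A : finType) (w : seq A) : graph A unit :=
  @Graph A unit 'I_(size w)
    (fun i _ j => (j : nat) == i.+1)
    (fun i => tnth (in_tuple w) i).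

Definition ed (A : finType) (w : seq A) : graph unit A :=
  @Graph unit A 'I_(size w).+1
    (fun i a j => ((j : nat) == i.+1) && (nth a w i == a))
    (fun _ => tt).

Definition nd_rel (A B : finType) (m : seq A -> seq B -> Prop)
  (g : graph A unit) (h : graph B unit) : Prop :=
  exists w z, m w z /\ iso g (nd w) /\ iso h (nd z).

Definition ed_rel (A B : finType) (m : seq A -> seq B -> Prop)
  (g : graph unit A) (h : graph unit B) : Prop :=
  exists w z, m w z /\ iso g (ed w) /\ iso h (ed z).

(* Main.v *)
Require Import Defs.
From mathcomp Require Import all_boot.
From Stdlib Require Import ClassicalEpsilon FunctionalExtensionality Classical.
Set Implicit Arguments. Unset Strict Implicit. Unset Printing Implicit Defensive.

Definition pb (P : Prop) : bool := if excluded_middle_informative P then true else false.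
Lemma pbP (P : Prop) : reflect P (pb P).
Proof. rewrite /pb; case: excluded_middle_informative => H; constructor => //. Qed.
Lemma pbE (P : Prop) : pb P = true <-> P.
Proof. by split => [/pbP|/pbP]. Qed.

Lemma inj_surj_bij (A B : Type) (f : A -> B) :
  injective f -> (forall y, exists x, f x = y) -> bijective f.
Proof.
move=> fi fs.
pose h y := proj1_sig (constructive_indefinite_description _ (fs y)).
have hK y : f (h y) = y by rewrite /h; case: constructive_indefinite_description.
exists h => [x|y]; last exact: hK.
by apply: fi; rewrite hK.
Qed.

Section Basic.
Variables S G : Type.
Implicit Types (g : graph S G) (phi : mso S G).

Definition MFalse : mso S G := MNot (MTrue S G).
Definition bigOr (l : seq (mso S G)) := foldr (@MOr S G) MFalse l.
Definition bigAnd (l : seq (mso S G)) := foldr (@MAnd S G) (MTrue S G) l.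

Lemma sat_MFalse g en es : ~ sat g en es MFalse.
Proof. by move=> /= H; apply: H. Qed.

Lemma sat_bigOr g en es (I : eqType) (s : seq I) (F : I -> mso S G) :
  sat g en es (bigOr (map F s)) <-> exists i, i \in s /\ sat g en es (F i).
Proof.
elim: s => [|i s IH] /=.
  by split => [H|[x [Hx _]]]; [case: (H Logic.I) | rewrite in_nil in Hx].
rewrite IH; split.
- case=> [H|[j [Hj H]]]; [exists i | exists j]; rewrite ?inE ?eqxx ?Hj ?orbT //.
- case=> j []; rewrite inE => /orP[/eqP->|Hj] H; [left|right; exists j] => //.
Qed.

Lemma sat_bigAnd g en es (I : eqType) (s : seq I) (F : I -> mso S G) :
  sat g en es (bigAnd (map F s)) <-> forall i, i \in s -> sat g en es (F i).
Proof.
elim: s => [|i s IH] /=; first by split => // _ x; rewrite in_nil.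
rewrite IH; split.
- case=> H1 H2 j; rewrite inE => /orP[/eqP->|Hj] //; exact: H2.
- move=> H; split; first by apply: H; rewrite inE eqxx.
  by move=> j Hj; apply: H; rewrite inE Hj orbT.
Qed.

Definition OrF (I : finType) (F : I -> mso S G) := bigOr (map F (enum I)).
Definition AndF (I : finType) (F : I -> mso S G) := bigAnd (map F (enum I)).

Lemma sat_OrF g en es (I : finType) (F : I -> mso S G) :
  sat g en es (OrF F) <-> exists i, sat g en es (F i).
Proof.
rewrite /OrF sat_bigOr; split; case=> i H; exists i => //.
  by case: H. by rewrite mem_enum.
Qed.

Lemma sat_AndF g en es (I : finType) (F : I -> mso S G) :
  sat g en es (AndF F) <-> forall i, sat g en es (F i).
Proof.
rewrite /AndF sat_bigAnd; split => H i //; first by apply: H; rewrite mem_enum.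
Qed.

Fixpoint ren (r s : nat -> nat) phi : mso S G :=
  match phi with
  | MLab a x => MLab G a (r x)
  | MEdge c x y => MEdge S c (r x) (r y)
  | MEq x y => MEq S G (r x) (r y)
  | MIn x X => MIn S G (r x) (s X)
  | MTrue => MTrue S G
  | MNot p => MNot (ren r s p)
  | MAnd p q => MAnd (ren r s p) (ren r s q)
  | MOr p q => MOr (ren r s p) (ren r s q)
  | MExN x p => MExN (r x) (ren r s p)
  | MAllN x p => MAllN (r x) (ren r s p)
  | MExS X p => MExS (s X) (ren r s p)
  | MAllS X p => MAllS (s X) (ren r s p)
  end.

Lemma upd_comp T (e : nat -> T) r x u :
  injective r -> (fun n => upd e (r x) u (r n)) = upd (fun n => e (r n)) x u.
Proof. by move=> ir; apply: functional_extensionality => n; rewrite /upd (inj_eq ir). Qed.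

Lemma sat_ren g r s : injective r -> injective s ->
  forall phi en es, sat g en es (ren r s phi) <->
     sat g (fun n => en (r n)) (fun n => es (s n)) phi.
Proof.
move=> ir is_; elim => /=; try (intros; reflexivity).
- by move=> p IH en es; rewrite IH.
- by move=> p IHp q IHq en es; rewrite IHp IHq.
- by move=> p IHp q IHq en es; rewrite IHp IHq.
- move=> x p IH en es; split; case=> u H; exists u; move: H; by rewrite IH upd_comp.
- move=> x p IH en es; split=> H u; move: (H u); by rewrite IH upd_comp.
- move=> X p IH en es; split; case=> A H; exists A; move: H; by rewrite IH upd_comp.
- move=> X p IH en es; split=> H A; move: (H A); by rewrite IH upd_comp.
Qed.

Lemma iso_refl g : iso g g.
Proof. exists id; split; [by exists id|split] => //. Qed.

Lemma iso_sym g h : iso g h -> iso h g.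
Proof.
case=> f [[f' fK f'K] [Hl He]]; exists f'; split; first by exists f.
split=> [v|u c v]; first by rewrite -[in RHS](f'K v) Hl.
by rewrite -[in RHS](f'K u) -[in RHS](f'K v) He.
Qed.

Lemma iso_trans g h k : iso g h -> iso h k -> iso g k.
Proof.
case=> f [fb [Hl He]] [f2 [f2b [Hl2 He2]]]; exists (f2 \o f); split.
  exact: bij_comp.
by split=> [v|u c v] /=; rewrite ?Hl2 ?Hl ?He2 ?He.
Qed.

Lemma iso_empty g h : (gV g -> False) -> (gV h -> False) -> iso g h.
Proof.
move=> Eg Eh; exists (fun u => match Eg u with end); split.
  by exists (fun v => match Eh v with end) => x; [case: (Eg x)|case: (Eh x)].
by split=> [v|u]; case: (Eg v) || case: (Eg u).
Qed.

Lemma omap_upd (A B : Type) (f : A -> B) (en : nat -> option A) x u :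
  (fun n => omap f (upd en x (Some u) n)) = upd (fun n => omap f (en n)) x (Some (f u)).
Proof. by apply: functional_extensionality => n; rewrite /upd; case: eqP. Qed.

Lemma imset_upd (A B : finType) (f : A -> B) (es : nat -> {set A}) X C :
  (fun n => f @: upd es X C n) = upd (fun n => f @: es n) X (f @: C).
Proof. by apply: functional_extensionality => n; rewrite /upd; case: eqP. Qed.

Lemma sat_iso g h (f : gV g -> gV h) : bijective f ->
  (forall v, glab h (f v) = glab g v) ->
  (forall u c v, gE h (f u) c (f v) = gE g u c v) ->
  forall phi en es, sat g en es phi <->
    sat h (fun n => omap f (en n)) (fun n => f @: es n) phi.
Proof.
move=> fb Hl He; have fi := bij_inj fb; case: fb => f' fK f'K.
elim => /=.
- move=> s x en es; split.
    by case=> u [-> <-]; exists (f u).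
  by case=> v []; case: (en x) => [u|] //= [<-] <-; exists u.
- move=> c x y en es; split.
    by case=> u [v [-> [-> H]]]; exists (f u), (f v); rewrite He.
  case=> u' [v' []]; case: (en x) => [u|] //= [<-] [].
  by case: (en y) => [v|] //= [<-]; rewrite He => H; exists u, v.
- move=> x y en es; split.
    by case=> u [-> ->]; exists (f u).
  case=> v []; case: (en x) => [u|] //= [<-].
  by case: (en y) => [u'|] //= [/fi ->]; exists u.
- move=> x X en es; split.
    by case=> u [-> H]; exists (f u); rewrite mem_imset.
  case=> v []; case: (en x) => [u|] //= [<-]; rewrite mem_imset // => H.
  by exists u.
- done.
- by move=> p IH en es; rewrite IH.
- by move=> p IHp q IHq en es; rewrite IHp IHq.
- by move=> p IHp q IHq en es; rewrite IHp IHq.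
- move=> x p IH en es; split.
    by case=> u /IH H; exists (f u); rewrite -omap_upd.
  by case=> v H; exists (f' v); apply/IH; rewrite omap_upd f'K.
- move=> x p IH en es; split.
    by move=> H v; rewrite -(f'K v) -omap_upd; apply/IH.
  by move=> H u; apply/IH; rewrite omap_upd.
- move=> X p IH en es; split.
    by case=> A /IH H; exists (f @: A); rewrite -imset_upd.
  case=> B H; exists (f' @: B); apply/IH; rewrite imset_upd.
  suff -> : f @: (f' @: B) = B by [].
  by rewrite -imset_comp (eq_imset _ f'K) imset_id.
- move=> X p IH en es; split.
    move=> H B; have -> : B = f @: (f' @: B).
      by rewrite -imset_comp (eq_imset _ f'K) imset_id.
    by rewrite -imset_upd; apply/IH.
  by move=> H A; apply/IH; rewrite imset_upd.
Qed.

Lemma sat0_iso g h phi : iso g h -> (sat0 g phi <-> sat0 h phi).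
Proof.
case=> f [fb [Hl He]]; rewrite /sat0 (sat_iso fb Hl He) /=.
suff -> : (fun _ : nat => f @: (set0 : {set gV g})) = (fun _ => set0) by [].
by apply: functional_extensionality => n; rewrite imset0.
Qed.

Lemma set0_fun (A B : finType) (f : A -> B) :
  (fun _ : nat => f @: (set0 : {set A})) = (fun _ => set0).
Proof. by apply: functional_extensionality => n; rewrite imset0. Qed.

Lemma sat1_iso g h (f : gV g -> gV h) : bijective f ->
  (forall v, glab h (f v) = glab g v) ->
  (forall u c v, gE h (f u) c (f v) = gE g u c v) ->
  forall phi u, sat1 g u phi <-> sat1 h (f u) phi.
Proof.
move=> fb Hl He phi u; rewrite /sat1 (sat_iso fb Hl He) omap_upd set0_fun //.
Qed.

Lemma sat2_iso g h (f : gV g -> gV h) : bijective f ->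
  (forall v, glab h (f v) = glab g v) ->
  (forall u c v, gE h (f u) c (f v) = gE g u c v) ->
  forall phi u v, sat2 g u v phi <-> sat2 h (f u) (f v) phi.
Proof.
move=> fb Hl He phi u v; rewrite /sat2 (sat_iso fb Hl He) omap_upd omap_upd set0_fun //.
Qed.

End Basic.

Lemma pb_iff (P : Prop) (b : bool) : (P <-> b) -> pb P = b.
Proof. by move=> H; apply/idP/idP => [/pbP/H|/H/pbP]. Qed.

Section Out.
Variables (S1 G1 S2 G2 : Type) (t : mso_trans S1 G1 S2 G2).

Definition outb (g : graph S1 G1) (p : (gV g * copies t)%type) := pb (out_node t g p.1 p.2).
Arguments outb : clear implicits.
Local Notation outV g := {p : (gV g * copies t)%type | outb g p}.

Lemma outbP g (n : outV g) : out_node t g (val n).1 (val n).2.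
Proof. exact/pbP/(valP n). Qed.

Definition out_lab g (n : outV g) : S2 :=
  proj1_sig (constructive_indefinite_description _ (outbP n)).

Lemma out_labP g (n : outV g) : sat1 g (val n).1 (node_f t (val n).2 (out_lab n)).
Proof. by rewrite /out_lab; case: constructive_indefinite_description => s [] /=. Qed.

Lemma out_lab_uniq g (n : outV g) s :
  sat1 g (val n).1 (node_f t (val n).2 s) -> out_lab n = s.
Proof. by rewrite /out_lab; case: constructive_indefinite_description => s0 [] /= _; apply. Qed.

Definition out_E g (n : outV g) (a : G2) (n' : outV g) : bool :=
  pb (sat2 g (val n).1 (val n').1 (edge_f t (val n).2 (val n').2 a)).

Definition outg g : graph S2 G2 := @Graph S2 G2 (outV g) (@out_E g) (@out_lab g).

Lemma out_EP g (n n' : outV g) a :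
  gE (outg g) n a n' <-> sat2 g (val n).1 (val n').1 (edge_f t (val n).2 (val n').2 a).
Proof. exact: pbE. Qed.

Lemma is_output_iso g h : is_output t g h <-> iso h (outg g).
Proof.
split.
- case=> f [fi [Hn [Hl He]]].
  have Hb v : outb g (f v).
    by apply/pbP; apply/Hn; exists v; rewrite -surjective_pairing.
  exists (fun v => exist _ (f v) (Hb v)); split.
    apply: inj_surj_bij => [u v /(congr1 val) /= /fi //|n].
    case: ((Hn (val n).1 (val n).2).1 (outbP n)) => v E; exists v; apply: val_inj => /=.
    by rewrite E -surjective_pairing.
  split=> [v|u c v] /=; first by apply: out_lab_uniq; exact: Hl.
  by apply: pb_iff; rewrite He.
- case=> F [Fb [Hl He]]; exists (fun v => val (F v)); split.
    by move=> u v /val_inj /(bij_inj Fb).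
  split.
    move=> u c; split.
      move=> H; have Hb : outb g (u, c) by apply/pbP.
      case: Fb => F' K1 K2; exists (F' (exist _ (u, c) Hb)); by rewrite K2.
    by case=> v E; have := outbP (F v); rewrite E.
  split=> [v|v1 c v2]; first by rewrite -Hl; exact: out_labP.
  by rewrite -He; exact: pbE.
Qed.

Lemma is_output_out g : is_output t g (outg g).
Proof. by apply/is_output_iso; exact: iso_refl. Qed.

Lemma is_output_uniq g h1 h2 : is_output t g h1 -> is_output t g h2 -> iso h1 h2.
Proof.
move=> /is_output_iso H1 /is_output_iso H2; apply: iso_trans H1 _; exact: iso_sym.
Qed.

Lemma out_node_iso g g' (f : gV g -> gV g') : bijective f ->
  (forall v, glab g' (f v) = glab g v) ->
  (forall u c v, gE g' (f u) c (f v) = gE g u c v) ->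
  forall u c, out_node t g u c <-> out_node t g' (f u) c.
Proof.
move=> fb Hl He u c; split; case=> s [H1 H2]; exists s; split.
- by apply/(sat1_iso fb Hl He).
- by move=> s' H; apply: H2; apply/(sat1_iso fb Hl He).
- by apply/(sat1_iso fb Hl He).
- by move=> s' H; apply: H2; apply/(sat1_iso fb Hl He).
Qed.

Lemma out_iso_cong g g' : iso g g' -> iso (outg g) (outg g').
Proof.
case=> f [fb [Hl He]]; apply/is_output_iso.
have fi := bij_inj fb.
exists (fun n => (f (val n).1, (val n).2)); split.
  move=> n n' [/fi E1 E2]; apply: val_inj.
  by rewrite [val n]surjective_pairing [val n']surjective_pairing E1 E2.
split.
  move=> u' c; case: (fb) => f' K1 K2; split.
    move=> H; have Hb : outb g (f' u', c).
      by apply/pbP; apply/(out_node_iso fb Hl He); rewrite K2.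
    by exists (exist _ (f' u', c) Hb); rewrite /= K2.
  by case=> n [<- <-]; apply/(out_node_iso fb Hl He)/outbP.
split=> [n|n1 c n2] /=.
  by apply/(sat1_iso fb Hl He); exact: out_labP.
by rewrite out_EP (sat2_iso fb Hl He).
Qed.

End Out.

From mathcomp Require Import zify.
Notation outV t g := {p : (gV g * copies t)%type | @outb _ _ _ _ t g p}.

Lemma upd_same T (e : nat -> T) x u : upd e x u x = u.
Proof. by rewrite /upd eqxx. Qed.
Lemma upd_other T (e : nat -> T) x y u : y != x -> upd e x u y = e y.
Proof. by rewrite /upd => /negbTE ->. Qed.
Lemma upd_comm T (e : nat -> T) x y u v : x != y ->
  upd (upd e x u) y v = upd (upd e y v) x u.
Proof.
move=> nxy; apply: functional_extensionality => n; rewrite /upd.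
case: (eqVneq n y) => [Ey|ny]; case: (eqVneq n x) => [Ex|nx] //.
by move: nxy; rewrite -Ex -Ey eqxx.
Qed.

Section Trans.
Variables (S1 G1 : Type) (S2 : finType) (G2 : Type) (t : mso_trans S1 G1 S2 G2).
Local Notation C := (copies t).
Local Notation K := #|C|.
Implicit Types (g : graph S1 G1).

Definition OUTf (c : C) : mso S1 G1 :=
  OrF (fun s : S2 => MAnd (node_f t c s)
        (AndF (fun s' : S2 => if s' == s then MTrue S1 G1 else MNot (node_f t c s')))).

Lemma sat_OUTf g en es c : sat g en es (OUTf c) <->
  exists s, sat g en es (node_f t c s) /\ forall s', s' <> s -> ~ sat g en es (node_f t c s').
Proof.
rewrite /OUTf sat_OrF; split; case=> s [H1 H2]; exists s; split => //.
- move=> s' ns; move/sat_AndF: H2 => /(_ s'); case: eqP => //.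
- apply/sat_AndF => s'; case: eqP => //= ns; exact: H2.
Qed.

Lemma OUTf_out g u c : sat1 g u (OUTf c) <-> out_node t g u c.
Proof.
rewrite /sat1 sat_OUTf; split; case=> s [H1 H2]; exists s; split => //.
- by move=> s' H; case: (eqVneq s' s) => // /eqP ns; case: (H2 s' (nesym (nesym ns))).
- by move=> s' ns H; apply: ns; symmetry; exact: H2.
Qed.

Definition enc (X : nat) (c : C) : nat := X * K + enum_rank c.

Lemma enc_inj X Y c d : enc X c = enc Y d -> X = Y /\ c = d.
Proof.
rewrite /enc => E.
have K0 : 0 < K by apply/card_gt0P; exists c.
have Hr : (enum_rank c : nat) = enum_rank d.
  have := congr1 (modn^~ K) E.
  by rewrite !modnMDl !modn_small // ltn_ord.
have -> : c = d by apply: enum_rank_inj; apply: val_inj.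
split => //; move: E; rewrite Hr => /addIn /eqP; rewrite eqn_pmul2r // => /eqP //.
Qed.

Lemma enc_lt X c B : X.+1 * K <= B -> enc X c < B.
Proof.
rewrite /enc mulSn => H; apply: leq_trans H; rewrite addnC ltn_add2r; exact: ltn_ord.
Qed.

Definition r1 (B n : nat) := if n == 0 then B else B + n.+1.
Definition r2 (B n : nat) := if n == 0 then B else if n == 1 then B.+1 else B + n.+2.
Definition s1 (B n : nat) := B + n.

Lemma r1_inj B : injective (r1 B).
Proof. move=> n m; rewrite /r1; do 2 case: eqP; lia. Qed.
Lemma r2_inj B : injective (r2 B).
Proof. move=> n m; rewrite /r2; case: (n =P 0); case: (n =P 1); case: (m =P 0); case: (m =P 1); lia. Qed.
Lemma s1_inj B : injective (s1 B).
Proof. move=> n m; rewrite /s1; lia. Qed.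

Definition LABf B (psi : mso S1 G1) x : mso S1 G1 :=
  MExN B (MAnd (MEq S1 G1 B x) (ren (r1 B) (s1 B) psi)).
Definition EDGf B (psi : mso S1 G1) x y : mso S1 G1 :=
  MExN B (MExN B.+1 (MAnd (MEq S1 G1 B x) (MAnd (MEq S1 G1 B.+1 y) (ren (r2 B) (s1 B) psi)))).

Lemma LABf_sat g B psi x en es : x < B -> (forall n, B <= n -> en n = None) ->
  (forall n, B <= n -> es n = set0) ->
  (sat g en es (LABf B psi x) <-> exists u, en x = Some u /\ sat1 g u psi).
Proof.
move=> xB Hen Hes.
have Es : (fun n => es (s1 B n)) = (fun _ => set0).
  by apply: functional_extensionality => n; apply: Hes; rewrite /s1 leq_addr.
have Ee u : (fun n => upd en B (Some u) (r1 B n)) = upd (fun _ => None) 0 (Some u).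
  apply: functional_extensionality => n; rewrite /r1 /upd.
  case: n => [|n] /=; first by rewrite eqxx.
  have -> : (B + n.+2 == B) = false by lia.
  by apply: Hen; lia.
have xnB : x != B by lia.
rewrite /= /sat1; split.
- case=> u [[u0 []]]; rewrite upd_same (upd_other _ _ xnB) => [[<-]] Ex.
  by rewrite (sat_ren (r1_inj (B:=B)) (s1_inj (B:=B))) Ee Es => H; exists u.
- case=> u [Ex H]; exists u; split.
    by exists u; rewrite upd_same (upd_other _ _ xnB).
  by rewrite (sat_ren (r1_inj (B:=B)) (s1_inj (B:=B))) Ee Es.
Qed.

Lemma EDGf_sat g B psi x y en es : x < B -> y < B ->
  (forall n, B <= n -> en n = None) ->
  (forall n, B <= n -> es n = set0) ->
  (sat g en es (EDGf B psi x y) <->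
   exists u v, en x = Some u /\ en y = Some v /\ sat2 g u v psi).
Proof.
move=> xB yB Hen Hes.
have Es : (fun n => es (s1 B n)) = (fun _ => set0).
  by apply: functional_extensionality => n; apply: Hes; rewrite /s1 leq_addr.
have Ee u v : (fun n => upd (upd en B (Some u)) B.+1 (Some v) (r2 B n)) =
     upd (upd (fun _ => None) 0 (Some u)) 1 (Some v).
  apply: functional_extensionality => n; rewrite /r2 /upd.
  have EB : (B == B.+1) = false by lia.
  case: n => [|[|n]] /=; first by rewrite EB eqxx.
    by rewrite eqxx.
  have -> : (B + n.+4 == B.+1) = false by lia.
  have -> : (B + n.+4 == B) = false by lia.
  by apply: Hen; lia.
have xnB : x != B by lia.
have ynB : y != B by lia.
have xnB1 : x != B.+1 by lia.
have ynB1 : y != B.+1 by lia.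
have BnB1 : B != B.+1 by lia.
rewrite /= /sat2; split.
- case=> u [v [[u0 []]]]; rewrite (upd_other _ _ BnB1) upd_same.
  rewrite (upd_other _ _ xnB1) (upd_other _ _ xnB) => [[<-]] Ex.
  case=> [[v0 []]]; rewrite upd_same (upd_other _ _ ynB1) (upd_other _ _ ynB) => [[<-]] Ey.
  by rewrite (sat_ren (r2_inj (B:=B)) (s1_inj (B:=B))) Ee Es => H; exists u, v.
- case=> u [v [Ex [Ey H]]]; exists u, v; split.
    by exists u; rewrite (upd_other _ _ BnB1) upd_same (upd_other _ _ xnB1) (upd_other _ _ xnB).
  split.
    by exists v; rewrite upd_same (upd_other _ _ ynB1) (upd_other _ _ ynB).
  by rewrite (sat_ren (r2_inj (B:=B)) (s1_inj (B:=B))) Ee Es.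
Qed.

Fixpoint tr (B : nat) (k : nat -> option C) (phi : mso S2 G2) : mso S1 G1 :=
  match phi with
  | MLab s x => if k x is Some c then LABf B (node_f t c s) x else MFalse _ _
  | MEdge a x y => if k x is Some c then
                     if k y is Some d then EDGf B (edge_f t c d a) x y else MFalse _ _
                   else MFalse _ _
  | MEq x y => if k x == k y then MEq S1 G1 x y else MFalse _ _
  | MIn x X => if k x is Some c then MIn S1 G1 x (enc X c) else MFalse _ _
  | MTrue => MTrue S1 G1
  | MNot p => MNot (tr B k p)
  | MAnd p q => MAnd (tr B k p) (tr B k q)
  | MOr p q => MOr (tr B k p) (tr B k q)
  | MExN x p => OrF (fun c : C =>
        MExN x (MAnd (LABf B (OUTf c) x) (tr B (upd k x (Some c)) p)))
  | MAllN x p => AndF (fun c : C =>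
        MAllN x (MOr (MNot (LABf B (OUTf c) x)) (tr B (upd k x (Some c)) p)))
  | MExS X p => foldr (fun c q => MExS (enc X c) q) (tr B k p) (enum C)
  | MAllS X p => foldr (fun c q => MAllS (enc X c) q) (tr B k p) (enum C)
  end.

Fixpoint bnd (B : nat) (phi : mso S2 G2) : Prop :=
  match phi with
  | MLab _ x => x < B
  | MEdge _ x y => x < B /\ y < B
  | MEq x y => x < B /\ y < B
  | MIn x X => x < B /\ X.+1 * K <= B
  | MTrue => True
  | MNot p => bnd B p
  | MAnd p q => bnd B p /\ bnd B q
  | MOr p q => bnd B p /\ bnd B q
  | MExN x p => x < B /\ bnd B p
  | MAllN x p => x < B /\ bnd B p
  | MExS X p => X.+1 * K <= B /\ bnd B p
  | MAllS X p => X.+1 * K <= B /\ bnd B p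
  end.

Fixpoint setF (A : finType) (es0 : nat -> {set A}) X (cs : seq C) (F : C -> {set A}) :=
  if cs is c :: cs' then upd (setF es0 X cs' F) (enc X c) (F c) else es0.

Lemma setF_upd (A : finType) (es0 : nat -> {set A}) X cs F c D : c \notin cs ->
  setF (upd es0 (enc X c) D) X cs F = upd (setF es0 X cs F) (enc X c) D.
Proof.
elim: cs => [|d cs IH] //=; rewrite inE negb_or => /andP[ncd ncs].
rewrite IH // upd_comm //; apply/eqP => /enc_inj [_ E]; by rewrite E eqxx in ncd.
Qed.

Lemma setF_eq (A : finType) (es0 : nat -> {set A}) X cs F F' :
  (forall d, d \in cs -> F d = F' d) -> setF es0 X cs F = setF es0 X cs F'.
Proof.
elim: cs => [|d cs IH] //= H; rewrite H ?inE ?eqxx // IH // => e He.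
by apply: H; rewrite inE He orbT.
Qed.

Lemma setF_in (A : finType) (es0 : nat -> {set A}) X cs F c :
  c \in cs -> setF es0 X cs F (enc X c) = F c.
Proof.
elim: cs => [|d cs IH] //=; rewrite inE; case: (eqVneq c d) => [->|ncd] /=.
  by rewrite upd_same.
move=> /IH <-; rewrite upd_other //; apply/eqP => /enc_inj [_ E].
by rewrite E eqxx in ncd.
Qed.

Lemma setF_out (A : finType) (es0 : nat -> {set A}) X cs F n :
  (forall d, d \in cs -> enc X d != n) -> setF es0 X cs F n = es0 n.
Proof.
elim: cs => [|d cs IH] //= H; rewrite upd_other; last by rewrite eq_sym H // inE eqxx.
by apply: IH => e He; apply: H; rewrite inE He orbT.
Qed.

Lemma foldr_ExS g en es0 X (cs : seq C) body : uniq cs ->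
  (sat g en es0 (foldr (fun c q => MExS (enc X c) q) body cs) <->
   exists F : C -> {set gV g}, sat g en (setF es0 X cs F) body).
Proof.
elim: cs es0 => [|c cs IH] es0 /=.
  by move=> _; split => [H|[F H]] //; exists (fun _ => set0).
case/andP => ncs ucs; split.
- case=> D /(IH _ ucs) [F H]; exists (fun d => if d == c then D else F d) => /=.
  have -> : setF es0 X cs (fun d => if d == c then D else F d) = setF es0 X cs F.
    by apply: setF_eq => d Hd; case: eqP => // E; by rewrite -E Hd in ncs.
  by rewrite eqxx -setF_upd.
- case=> F H; exists (F c); apply/(IH _ ucs); exists F; by rewrite setF_upd.
Qed.

Lemma foldr_AllS g en es0 X (cs : seq C) body : uniq cs ->
  (sat g en es0 (foldr (fun c q => MAllS (enc X c) q) body cs) <->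
   forall F : C -> {set gV g}, sat g en (setF es0 X cs F) body).
Proof.
elim: cs es0 => [|c cs IH] es0 /=.
  by move=> _; split => [H|H] //; apply: (H (fun _ => set0)).
case/andP => ncs ucs; split.
- move=> H F; have := H (F c); move/(IH _ ucs) => /(_ F); by rewrite setF_upd.
- move=> H D; apply/(IH _ ucs) => F.
  have := H (fun d => if d == c then D else F d) => /=.
  have -> : setF es0 X cs (fun d => if d == c then D else F d) = setF es0 X cs F.
    by apply: setF_eq => d Hd; case: eqP => // E; by rewrite -E Hd in ncs.
  by rewrite eqxx -setF_upd.
Qed.

Definition Rel g B (k : nat -> option C) (en : nat -> option (outV t g))
  (es : nat -> {set outV t g}) (en' : nat -> option (gV g)) (es' : nat -> {set gV g}) :=
  [/\ forall x, en' x = omap (fun n => (val n).1) (en x),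
      forall x n, en x = Some n -> k x = Some (val n).2,
      forall n, B <= n -> en n = None,
      forall X (n : outV t g), ((val n).1 \in es' (enc X (val n).2)) = (n \in es X)
    & forall n, B <= n -> es' n = set0].
Arguments Rel : clear implicits.

Lemma Rel_en' g B k en es en' es' : Rel g B k en es en' es' ->
  forall n, B <= n -> en' n = None.
Proof. by case=> R1 _ R3 _ _ n Hn; rewrite R1 R3. Qed.

Lemma Rel_es' g B k en es en' es' : Rel g B k en es en' es' ->
  forall n, B <= n -> es' n = set0.
Proof. by case. Qed.

Lemma Rel_updN g B k en es en' es' x (n : outV t g) : x < B ->
  Rel g B k en es en' es' ->
  Rel g B (upd k x (Some (val n).2)) (upd en x (Some n)) es
      (upd en' x (Some (val n).1)) es'.
Proof.
move=> xB [R1 R2 R3 R4 R5]; split => //.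
- by move=> y; rewrite /upd; case: eqP.
- move=> y m; rewrite /upd; case: eqP => [_ [<-] //|_]; exact: R2.
- by move=> m Hm; rewrite upd_other ?R3 //; lia.
Qed.

Lemma Rel_updS g B k en es en' es' X (A : {set outV t g}) (F : C -> {set gV g}) :
  X.+1 * K <= B -> Rel g B k en es en' es' ->
  (forall n : outV t g, ((val n).1 \in F (val n).2) = (n \in A)) ->
  Rel g B k en (upd es X A) en' (setF es' X (enum C) F).
Proof.
move=> XB [R1 R2 R3 R4 R5] HF; split => //.
- move=> Y n; rewrite /upd; case: eqP => [->|nYX].
    by rewrite setF_in ?mem_enum.
  rewrite setF_out ?R4 // => d _; apply/eqP => /enc_inj [E _]; exact: nYX.
- move=> n Hn; rewrite setF_out ?R5 // => d _; apply/eqP => E.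
  by have := enc_lt d XB; rewrite E; lia.
Qed.

Lemma tr_correct g B : forall phi k en es en' es', bnd B phi ->
  Rel g B k en es en' es' ->
  (sat (outg t g) en es phi <-> sat g en' es' (tr B k phi)).
Proof.
elim => /=.
- move=> s x k en es en' es' xB R; have [R1 R2 R3 R4 R5] := R.
  case E: (en x) => [n|].
    rewrite (R2 _ _ E) (LABf_sat _ xB (Rel_en' R) R5) R1 E /=; split.
      by case=> u [[<-] <-]; exists (val n).1; split => //; exact: out_labP.
    by case=> u [[<-] H]; exists n; split => //; exact: out_lab_uniq.
  split; first by case=> u [].
  case: (k x) => [c|]; last by move/sat_MFalse.
  by rewrite (LABf_sat _ xB (Rel_en' R) R5) R1 E; case=> u [].
- move=> a x y k en es en' es' [xB yB] R; have [R1 R2 R3 R4 R5] := R.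
  case E: (en x) => [n|]; last first.
    split; first by case=> u [v [Ex _]].
    case: (k x) => [c|]; last by move/sat_MFalse.
    case: (k y) => [d|]; last by move/sat_MFalse.
    by rewrite (EDGf_sat _ xB yB (Rel_en' R) R5) R1 E /=; case=> u [v [Ex _]].
  case E': (en y) => [n'|]; last first.
    split; first by case=> u [v [_ [Ey _]]].
    rewrite (R2 _ _ E); case: (k y) => [d|]; last by move/sat_MFalse.
    by rewrite (EDGf_sat _ xB yB (Rel_en' R) R5) R1 R1 E' /=; case=> u [v [_ [Ey _]]].
  rewrite (R2 _ _ E) (R2 _ _ E') (EDGf_sat _ xB yB (Rel_en' R) R5) R1 R1 E E' /=.
  split.
    case=> u [v [[<-] [[<-]]]] /out_EP H; by exists (val n).1, (val n').1.
  case=> u [v [[<-] [[<-]]]] H; exists n, n'; do 2 split => //; exact/out_EP.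
- move=> x y k en es en' es' [xB yB] R; have [R1 R2 R3 R4 R5] := R.
  case: eqP => Ek /=.
    split.
      by case=> n [Ex Ey]; exists (val n).1; rewrite !R1 Ex Ey.
    case=> u []; rewrite !R1.
    case Ex: (en x) => [n|] //= [En]; case Ey: (en y) => [n'|] //= [En'].
    exists n; split => //; congr Some; apply: val_inj.
    rewrite [val n]surjective_pairing [val n']surjective_pairing En En'.
    have := R2 _ _ Ex; have := R2 _ _ Ey; rewrite Ek => -> [->] //.
  split; last by move=> H; case: (H Logic.I).
  case=> n [Ex Ey]; case: Ek; by rewrite (R2 _ _ Ex) (R2 _ _ Ey).
- move=> x X k en es en' es' [xB XB] R; have [R1 R2 R3 R4 R5] := R.
  case E: (en x) => [n|].
    rewrite (R2 _ _ E) /= R1 E /=; split.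
      by case=> m [[<-] H]; exists (val n).1; rewrite R4.
    by case=> u [[<-]]; rewrite R4 => H; exists n.
  split; first by case=> u [].
  case: (k x) => [c|]; last by move/sat_MFalse.
  by rewrite /= R1 E; case=> u [].
- done.
- by move=> p IH k en es en' es' Hb R; rewrite (IH _ _ _ _ _ Hb R).
- move=> p IHp q IHq k en es en' es' [Hp Hq] R.
  by rewrite (IHp _ _ _ _ _ Hp R) (IHq _ _ _ _ _ Hq R).
- move=> p IHp q IHq k en es en' es' [Hp Hq] R.
  by rewrite (IHp _ _ _ _ _ Hp R) (IHq _ _ _ _ _ Hq R).
- move=> x p IH k en es en' es' [xB Hp] R; rewrite sat_OrF; split.
    case=> n H; exists (val n).2, (val n).1; split.
      have R' := Rel_updN n xB R.
      rewrite (LABf_sat _ xB (Rel_en' R') (Rel_es' R')) upd_same.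
      exists (val n).1; split => //; apply/OUTf_out; exact: outbP.
    by apply/(IH _ _ _ _ _ Hp (Rel_updN n xB R)).
  case=> c [u [HL H]].
  have R0 : forall v, Rel g B k en es en' es' -> forall n, B <= n -> upd en' x v n = None.
    by move=> v R'' m Hm; rewrite upd_other ?(Rel_en' R'') //; lia.
  move: ((LABf_sat _ xB (R0 (Some u) R) (Rel_es' R)).1 HL); rewrite upd_same => [[u0 [[<-]]]] /OUTf_out Hu.
  have Hb : outb (t := t) (g := g) (u, c) by apply/pbP.
  exists (exist _ (u, c) Hb).
  by apply/(IH _ _ _ _ _ Hp (Rel_updN (exist _ (u, c) Hb) xB R)).
- move=> x p IH k en es en' es' [xB Hp] R; rewrite sat_AndF.
  have R0 : forall v, Rel g B k en es en' es' -> forall n, B <= n -> upd en' x v n = None.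
    by move=> v R'' m Hm; rewrite upd_other ?(Rel_en' R'') //; lia.
  split.
    move=> H c u.
    case: (classic (out_node t g u c)) => Hu.
      have Hb : outb (t := t) (g := g) (u, c) by apply/pbP.
      right; apply/(IH _ _ _ _ _ Hp (Rel_updN (exist _ (u, c) Hb) xB R)); exact: H.
    left => HL; move: ((LABf_sat _ xB (R0 (Some u) R) (Rel_es' R)).1 HL).
    rewrite upd_same => [[u0 [[<-]]]] /OUTf_out; exact: Hu.
  move=> H n; case: (H (val n).2 (val n).1) => [HL|Ht].
    exfalso; apply: HL; apply: ((LABf_sat _ xB (R0 (Some (val n).1) R) (Rel_es' R)).2).
    rewrite upd_same; exists (val n).1; split => //; apply/OUTf_out; exact: outbP.
  by apply/(IH _ _ _ _ _ Hp (Rel_updN n xB R)).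
- move=> X p IH k en es en' es' [XB Hp] R; rewrite foldr_ExS ?enum_uniq //; split.
    case=> A H; exists (fun c => [set u | [exists n in A, val n == (u, c)]]).
    have HF : forall n : outV t g, ((val n).1 \in
        (fun c => [set u | [exists n in A, val n == (u, c)]]) (val n).2) = (n \in A).
      move=> n; rewrite inE; apply/existsP/idP => [[n' /andP[Hn' /eqP E]]|Hn].
        by rewrite -surjective_pairing in E; move/val_inj: E => <-.
      by exists n; rewrite Hn -surjective_pairing eqxx.
    by apply/(IH _ _ _ _ _ Hp (Rel_updS XB R HF)).
  case=> F H; exists [set n : outV t g | (val n).1 \in F (val n).2].
  have HF : forall n : outV t g, ((val n).1 \in F (val n).2) =
     (n \in [set n : outV t g | (val n).1 \in F (val n).2]) by move=> n; rewrite inE.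
  by apply/(IH _ _ _ _ _ Hp (Rel_updS XB R HF)).
- move=> X p IH k en es en' es' [XB Hp] R; rewrite foldr_AllS ?enum_uniq //; split.
    move=> H F; have := H [set n : outV t g | (val n).1 \in F (val n).2].
    have HF : forall n : outV t g, ((val n).1 \in F (val n).2) =
       (n \in [set n : outV t g | (val n).1 \in F (val n).2]) by move=> n; rewrite inE.
    by move/(IH _ _ _ _ _ Hp (Rel_updS XB R HF)).
  move=> H A; have := H (fun c => [set u | [exists n in A, val n == (u, c)]]).
  have HF : forall n : outV t g, ((val n).1 \in
      (fun c => [set u | [exists n in A, val n == (u, c)]]) (val n).2) = (n \in A).
    move=> n; rewrite inE; apply/existsP/idP => [[n' /andP[Hn' /eqP E]]|Hn].
      by rewrite -surjective_pairing in E; move/val_inj: E => <-.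
    by exists n; rewrite Hn -surjective_pairing eqxx.
  by move/(IH _ _ _ _ _ Hp (Rel_updS XB R HF)).
Qed.


Fixpoint maxv (phi : mso S2 G2) : nat :=
  match phi with
  | MLab _ x => x
  | MEdge _ x y => maxn x y
  | MEq x y => maxn x y
  | MIn x X => maxn x X
  | MTrue => 0
  | MNot p => maxv p
  | MAnd p q => maxn (maxv p) (maxv q)
  | MOr p q => maxn (maxv p) (maxv q)
  | MExN x p => maxn x (maxv p)
  | MAllN x p => maxn x (maxv p)
  | MExS X p => maxn X (maxv p)
  | MAllS X p => maxn X (maxv p)
  end.

Definition Bof phi := (maxn (maxv phi) 1).+1 * K.+1.

Lemma bnd_M M phi : maxv phi <= M -> bnd (M.+1 * K.+1) phi.
Proof.
have A x : x <= M -> x < M.+1 * K.+1.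
  by move=> H; apply: leq_trans (leq_pmulr _ (ltn0Sn K)).
have B X : X <= M -> X.+1 * K <= M.+1 * K.+1.
  by move=> H; apply: leq_mul.
elim: phi => /=.
- by move=> _ x H; apply: A.
- by move=> _ x y; rewrite geq_max => /andP[? ?]; split; apply: A.
- by move=> x y; rewrite geq_max => /andP[? ?]; split; apply: A.
- by move=> x X; rewrite geq_max => /andP[? ?]; split; [apply: A|apply: B].
- done.
- by move=> p IH H; apply: IH.
- by move=> p IHp q IHq; rewrite geq_max => /andP[? ?]; split; [apply: IHp|apply: IHq].
- by move=> p IHp q IHq; rewrite geq_max => /andP[? ?]; split; [apply: IHp|apply: IHq].
- by move=> x p IH; rewrite geq_max => /andP[? ?]; split; [apply: A|apply: IH].
- by move=> x p IH; rewrite geq_max => /andP[? ?]; split; [apply: A|apply: IH].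
- by move=> x p IH; rewrite geq_max => /andP[? ?]; split; [apply: B|apply: IH].
- by move=> x p IH; rewrite geq_max => /andP[? ?]; split; [apply: B|apply: IH].
Qed.

Lemma bnd_Bof phi : bnd (Bof phi) phi.
Proof. by apply: bnd_M; rewrite leq_maxl. Qed.

Lemma Bof_gt1 phi : 1 < Bof phi.
Proof. rewrite /Bof; apply: leq_trans (leq_pmulr _ (ltn0Sn K)); by rewrite ltnS leq_maxr. Qed.

Definition tr0 phi := tr (Bof phi) (fun _ => None) phi.
Definition tr1 c phi := tr (Bof phi) (upd (fun _ => None) 0 (Some c)) phi.
Definition tr2 c d phi := tr (Bof phi) (upd (upd (fun _ => None) 0 (Some c)) 1 (Some d)) phi.

Lemma sat0_tr g phi : sat0 (outg t g) phi <-> sat0 g (tr0 phi).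
Proof.
apply: tr_correct; first exact: bnd_Bof.
by split => // X n; rewrite !inE.
Qed.

Lemma sat1_tr g (n : outV t g) phi :
  sat1 (outg t g) n phi <-> sat1 g (val n).1 (tr1 (val n).2 phi).
Proof.
apply: tr_correct; first exact: bnd_Bof.
split => //.
- by move=> x; rewrite /upd; case: eqP.
- by move=> x m; rewrite /upd; case: eqP => // _ [<-].
- move=> m Hm; rewrite upd_other //; have := Bof_gt1 phi; lia.
- by move=> X m; rewrite !inE.
Qed.

Lemma sat2_tr g (n n' : outV t g) phi :
  sat2 (outg t g) n n' phi <->
  sat2 g (val n).1 (val n').1 (tr2 (val n).2 (val n').2 phi).
Proof.
apply: tr_correct; first exact: bnd_Bof.
split => //.
- by move=> x; rewrite /upd; case: eqP => //; case: eqP.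
- move=> x m; rewrite /upd; case: eqP => [_ [<-] //|_].
  by case: eqP => // _ [<-].
- move=> m Hm; rewrite !upd_other //; have := Bof_gt1 phi; lia.
- by move=> X m; rewrite !inE.
Qed.

End Trans.

Section Comp.
Variables (S1 G1 : Type) (S2 : finType) (G2 S3 G3 : Type)
  (t1 : mso_trans S1 G1 S2 G2) (t2 : mso_trans S2 G2 S3 G3).

Definition comp : mso_trans S1 G1 S3 G3 :=
  @MsoTrans S1 G1 S3 G3 (copies t1 * copies t2)%type
    (MAnd (dom_f t1) (tr0 t1 (dom_f t2)))
    (fun cc s => MAnd (OUTf cc.1) (tr1 cc.1 (node_f t2 cc.2 s)))
    (fun cc dd a => tr2 cc.1 dd.1 (edge_f t2 cc.2 dd.2 a)).

Lemma comp_dom g : sat0 g (dom_f comp) <->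
  sat0 g (dom_f t1) /\ sat0 (outg t1 g) (dom_f t2).
Proof. by rewrite (sat0_tr t1). Qed.

Lemma comp_node g u (cc : copies comp) : out_node comp g u cc <->
  exists H : outb (t:=t1) (g:=g) (u, cc.1),
    out_node t2 (outg t1 g) (exist _ (u, cc.1) H) cc.2.
Proof.
split.
- case=> s [[HO HT] Hu]; have H : outb (t:=t1) (g:=g) (u, cc.1).
    by apply/pbP; apply/(OUTf_out (t:=t1)).
  exists H, s; split.
    exact: ((sat1_tr (exist _ (u, cc.1) H) _).2 HT).
  move=> s' H'; apply: Hu; split => //.
  exact: ((sat1_tr (exist _ (u, cc.1) H) _).1 H').
- case=> H [s [Hs Hu]]; exists s; split.
    split; first by apply/(OUTf_out (t:=t1)); apply/pbP.
    exact: ((sat1_tr (exist _ (u, cc.1) H) _).1 Hs).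
  move=> s' [_ H']; apply: Hu.
  exact: ((sat1_tr (exist _ (u, cc.1) H) _).2 H').
Qed.

Lemma comp_out1 g (n : outV comp g) : outb (t:=t1) (g:=g) ((val n).1, (val n).2.1).
Proof. by case: ((comp_node (val n).1 (val n).2).1 (outbP n)). Qed.

Lemma comp_out2 g (n : outV comp g) :
  outb (t:=t2) (g:=outg t1 g) (exist _ ((val n).1, (val n).2.1) (comp_out1 n), (val n).2.2).
Proof.
case: ((comp_node (val n).1 (val n).2).1 (outbP n)) => H Ho; apply/pbP.
by rewrite (bool_irrelevance (comp_out1 n) H).
Qed.

Definition comp_map g (n : outV comp g) : outV t2 (outg t1 g) :=
  exist _ (exist _ ((val n).1, (val n).2.1) (comp_out1 n), (val n).2.2) (comp_out2 n).

Lemma comp_out g : iso (outg comp g) (outg t2 (outg t1 g)).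
Proof.
exists (@comp_map g); split.
  apply: inj_surj_bij.
    move=> n n' E.
    have E1 := congr1 (fun y => val (val y).1) E.
    have E3 := congr1 (fun y => (val y).2) E.
    simpl in E1, E3; case: E1 => E1 E2; apply: val_inj.
    by rewrite [val n]surjective_pairing [val n']surjective_pairing
       [(val n).2]surjective_pairing [(val n').2]surjective_pairing E1 E2 E3.
  move=> y.
  pose m := (val y).1; pose c2 := (val y).2.
  have Hn : outb (t:=comp) (g:=g) ((val m).1, ((val m).2, c2)).
    apply/pbP; apply/comp_node => /=; exists (valP m).
    have -> : exist _ ((val m).1, (val m).2) (valP m) = m.
      by apply: val_inj; rewrite /= -surjective_pairing.
    by have := outbP y.
  exists (exist (fun p : (gV g * copies comp)%type => outb (t:=comp) (g:=g) p) _ Hn).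
  apply: val_inj => /=.
  rewrite [val y]surjective_pairing; congr pair.
  by apply: val_inj; rewrite /= -surjective_pairing.
split.
  move=> n /=; apply: out_lab_uniq.
  have [_ H] := out_labP n.
  exact: ((sat1_tr (exist _ ((val n).1, (val n).2.1) (comp_out1 n)) _).2 H).
move=> n a n' /=.
apply/idP/idP => /out_EP H; apply/out_EP.
  exact: ((sat2_tr (exist _ ((val n).1, (val n).2.1) (comp_out1 n))
                   (exist _ ((val n').1, (val n').2.1) (comp_out1 n')) _).1 H).
exact: ((sat2_tr (exist _ ((val n).1, (val n).2.1) (comp_out1 n))
                 (exist _ ((val n').1, (val n').2.1) (comp_out1 n')) _).2 H).
Qed.

End Comp.

Section Strings.
Variable A : finType.

Lemma ed_E (w : seq A) (i j : 'I_(size w).+1) a :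
  gE (ed w) i a j <-> ((j : nat) = i.+1 /\ i < size w /\ nth a w i = a).
Proof.
rewrite /=; split.
  case/andP => /eqP E /eqP N; split => //; split => //.
  by have := ltn_ord j; rewrite E ltnS.
by case=> E [H N]; apply/andP; split; apply/eqP.
Qed.

Lemma nth_tnth (w : seq A) (i : 'I_(size w)) a :
  (nth a w i = a) <-> (a = tnth (in_tuple w) i).
Proof.
split => [N|->]; last exact: (esym (tnth_nth _ (in_tuple w) i)).
by rewrite (tnth_nth a).
Qed.

Definition Nt : mso_trans unit A A unit :=
  @MsoTrans unit A A unit unit (MTrue _ _)
    (fun _ s => MExN 1 (MEdge unit s 0 1))
    (fun _ _ _ => OrF (fun s : A => MEdge unit s 0 1)).

Lemma Nt_node (g : graph unit A) (u : gV g) c s :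
  sat1 g u (node_f Nt c s) <-> exists v, gE g u s v.
Proof.
rewrite /sat1 /=; split.
  by case=> v [a [b [[<-] [[<-]]]]] H; exists v.
by case=> v H; exists v, u, v.
Qed.

Lemma Nt_edge (g : graph unit A) (u v : gV g) c d a :
  sat2 g u v (edge_f Nt c d a) <-> exists s, gE g u s v.
Proof.
rewrite /sat2 /= sat_OrF; split.
  by case=> s [a' [b [[<-] [[<-]]]]] H; exists s.
by case=> s H; exists s, u, v.
Qed.

Lemma out_Nt_ed (w : seq A) (i : 'I_(size w).+1) c :
  out_node Nt (ed w) i c <-> i < size w.
Proof.
split.
  by case=> s [/Nt_node [v /ed_E [_ [H _]]] _].
move=> H; exists (tnth (in_tuple w) (Ordinal H)); split.
  apply/Nt_node; have H' : i.+1 < (size w).+1 by [].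
  exists (Ordinal H'); apply/ed_E; split => //; split => //.
  exact: (esym (tnth_nth _ (in_tuple w) (Ordinal H))).
move=> s' /Nt_node [v /ed_E [_ [_ N]]].
by symmetry; apply/(nth_tnth (Ordinal H)).
Qed.

Lemma outN_ed (w : seq A) (i : 'I_(size w)) :
  outb (t:=Nt) (g:=ed w) (widen_ord (leqnSn _) i, tt).
Proof. by apply/pbP; apply/out_Nt_ed => /=. Qed.

Definition Nmap (w : seq A) (i : 'I_(size w)) : outV Nt (ed w) :=
  exist _ (widen_ord (leqnSn _) i, tt) (outN_ed i).

Lemma iso_N_ed (w : seq A) : iso (nd w) (outg Nt (ed w)).
Proof.
exists (@Nmap w); split.
  apply: inj_surj_bij.
    move=> i j /(congr1 (fun n => nat_of_ord (val n).1)) /= E; exact: val_inj.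
  case=> [[i []] Hn]; have H : i < size w by apply/(out_Nt_ed _ tt)/pbP.
  exists (Ordinal H); apply: val_inj => /=; congr pair; exact: val_inj.
split.
  move=> i /=; apply: out_lab_uniq => /=; apply/(Nt_node _ tt).
  have H' : i.+1 < (size w).+1 by rewrite ltnS.
  exists (Ordinal H'); apply/ed_E; split => //; split => //=.
  exact: (esym (tnth_nth _ (in_tuple w) i)).
move=> i [] j /=; apply: pb_iff; rewrite Nt_edge; split.
  by case=> s /ed_E [E _]; apply/eqP.
move=> /eqP E; exists (tnth (in_tuple w) i); apply/ed_E; split => //; split => //=.
exact: (esym (tnth_nth _ (in_tuple w) i)).
Qed.

Definition SINKf x y : mso unit A := MNot (MExN y (OrF (fun s : A => MEdge unit s x y))).

Lemma SINKf_sat (g : graph unit A) en es x y u : x != y -> en x = Some u ->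
  (sat g en es (SINKf x y) <-> forall s v, ~ gE g u s v).
Proof.
move=> nxy Ex; rewrite /SINKf /=; split.
  move=> H s v E; apply: H; exists v; apply/sat_OrF; exists s; exists u, v.
  by rewrite upd_other // Ex upd_same.
move=> H [v /sat_OrF [s [a [b [Ea [Eb Ee]]]]]].
rewrite upd_other // Ex in Ea; rewrite upd_same in Eb.
by move: Ea Eb Ee => [<-] [<-]; apply: H.
Qed.

Definition UNIQf : mso unit A :=
  MAllN 0 (MAllN 1 (MAllN 2 (AndF (fun s : A => AndF (fun s' : A =>
    MOr (MNot (MAnd (MEdge unit s 0 1) (MEdge unit s' 0 2)))
        (if s == s' then MEq unit A 1 2 else MFalse _ _)))))).
Definition ONESINK : mso unit A :=
  MExN 0 (MAnd (SINKf 0 1) (MAllN 1 (MOr (MNot (SINKf 1 2)) (MEq unit A 0 1)))).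
Definition PATHed := MAnd UNIQf ONESINK.

Definition uniq_out (g : graph unit A) :=
  forall u v v' s s', gE g u s v -> gE g u s' v' -> v = v' /\ s = s'.
Definition sinkv (g : graph unit A) (u : gV g) := forall s v, ~ gE g u s v.

Lemma SINK01 (g : graph unit A) (s0 : gV g) :
  sat g (upd (fun _ => None) 0 (Some s0)) (fun _ => set0) (SINKf 0 1) <-> sinkv s0.
Proof. by apply: SINKf_sat. Qed.
Lemma SINK12 (g : graph unit A) (s0 y : gV g) :
  sat g (upd (upd (fun _ => None) 0 (Some s0)) 1 (Some y)) (fun _ => set0) (SINKf 1 2)
  <-> sinkv y.
Proof. by apply: SINKf_sat. Qed.

Lemma PATHed_sat (g : graph unit A) : sat0 g PATHed <->
  uniq_out g /\ exists s0 : gV g, sinkv s0 /\ forall y, sinkv y -> y = s0.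
Proof.
rewrite /sat0 /PATHed /=; split.
- case=> HU [s0 [HS HA]]; split.
    move=> u v v' s s' E1 E2.
    have := HU u v v'; move/sat_AndF => /(_ s) /sat_AndF /(_ s') [Hn|Hq].
      by case: Hn; split; [exists u, v | exists u, v'].
    case: eqP Hq => [<-|_] //; last by move=> /= H; case: (H Logic.I).
    by case=> a [[<-] [<-]].
  exists s0; split.
    by apply/SINK01.
  move=> y Hy; have [Hn|] := HA y.
    by case: Hn; apply/SINK12.
  by case=> a [[<-] [<-]].
- case=> HU [s0 [HS HA]]; split.
    move=> u v v'; apply/sat_AndF => s; apply/sat_AndF => s'.
    case: (classic (gE g u s v /\ gE g u s' v')) => [[E1 E2]|Hn]; last first.
      left => -[[a [b [[<-] [[<-] H1]]]] [a' [b' [[<-] [[<-] H2]]]]].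
      by apply: Hn.
    right; have [-> ->] := HU _ _ _ _ _ E1 E2; rewrite eqxx.
    by exists v'.
  exists s0; split.
    by apply/SINK01.
  move=> y; case: (classic (sinkv y)) => Hy.
    by right; rewrite (HA _ Hy); exists s0.
  by left; move/SINK12.
Qed.

End Strings.

Section Strings2.
Variable A : finType.

Lemma PATHed_ed (w : seq A) : sat0 (ed w) (PATHed A).
Proof.
apply/PATHed_sat; split.
  move=> u v v' s s' /ed_E [E1 [H1 N1]] /ed_E [E2 [H2 N2]]; split.
    by apply: ord_inj; rewrite E1 E2.
  by rewrite -N1 -N2; apply: set_nth_default.
exists ord_max; split.
  by move=> s v /ed_E [E [H _]]; rewrite /= ltnn in H.
move=> y Hy; apply: ord_inj => /=; apply/eqP; rewrite eqn_leq -ltnS ltn_ord /=.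
rewrite leqNgt; apply/negP => H.
have H' : y.+1 < (size w).+1 by [].
apply: (Hy (tnth (in_tuple w) (Ordinal H)) (Ordinal H')); apply/ed_E; split => //; split => //.
exact: (esym (tnth_nth _ (in_tuple w) (Ordinal H))).
Qed.

Lemma iso_ed_of (g : graph unit A) (w : seq A) :
  sat0 g (PATHed A) -> iso (outg (Nt A) g) (nd w) -> iso g (ed w).
Proof.
move=> /PATHed_sat [HU [s0 [HS0 HS]]] [psi [psib [Hl He]]].
have psii := bij_inj psib.
have Hout u c : out_node (Nt A) g u c <-> ~ sinkv u.
  split.
    by case=> s [/(Nt_node _ c) [v E] _] Hs; apply: (Hs s v).
  move=> Hs; have [s [v E]] : exists s v, gE g u s v.
    by apply: NNPP => H; apply: Hs => s v E; apply: H; exists s, v.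
  exists s; split; first by apply/(Nt_node _ c); exists v.
  move=> s' /(Nt_node _ c) [v' E']; exact: (HU _ _ _ _ _ E E').2.
have mk u (Hu : ~ sinkv u) : outb (t:=Nt A) (g:=g) (u, tt) by apply/pbP/Hout.
pose Phi (u : gV g) : 'I_(size w).+1 :=
  if (insub (u, tt) : option (outV (Nt A) g)) is Some n
  then widen_ord (leqnSn _) (psi n) else ord_max.
have F2 u (Hu : ~ sinkv u) : Phi u = widen_ord (leqnSn _) (psi (exist _ (u, tt) (mk u Hu))).
  by rewrite /Phi (insubT _ (mk u Hu)).
have F3 u (Hu : sinkv u) : Phi u = ord_max.
  rewrite /Phi insubF //; apply/negbTE/negP => /pbP /Hout; exact.
have Phi_inj : injective Phi.
  move=> u u' E; case: (classic (sinkv u)) => Hu; case: (classic (sinkv u')) => Hu'.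
  - by rewrite (HS _ Hu) (HS _ Hu').
  - move: E; rewrite (F3 _ Hu) (F2 _ Hu') => /(congr1 val) /= E.
    by have := ltn_ord (psi (exist _ (u', tt) (mk u' Hu'))); rewrite -E ltnn.
  - move: E; rewrite (F3 _ Hu') (F2 _ Hu) => /(congr1 val) /= E.
    by have := ltn_ord (psi (exist _ (u, tt) (mk u Hu))); rewrite E ltnn.
  - move: E; rewrite (F2 _ Hu) (F2 _ Hu') => /(congr1 val) /= E.
    by have /psii/(congr1 (fun n => (val n).1)) := val_inj E.
exists Phi; split.
  apply: inj_surj_bij => // j; case: (ltnP j (size w)) => Hj.
    case: psib => psi' K1 K2.
    pose n := psi' (Ordinal Hj).
    have Hn : ~ sinkv (val n).1 by apply/(Hout _ (val n).2)/outbP.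
    exists (val n).1; rewrite F2; apply: ord_inj => /=.
    have -> : exist _ ((val n).1, tt) (mk _ Hn) = n.
      by apply: val_inj => /=; case: (val n) => ? [].
    by rewrite K2.
  exists s0; rewrite F3 //; apply: ord_inj => /=; apply/eqP.
  by rewrite eqn_leq Hj -ltnS ltn_ord.
split; first by move=> u; case: (glab g u).
move=> u a v.
case: (classic (sinkv u)) => Hu.
  rewrite (F3 _ Hu); apply/idP/idP => [/ed_E [_ [H _]]|E].
    by rewrite /= ltnn in H.
  by case: (Hu a v E).
have [s1 [y0 E0]] : exists s v', gE g u s v'.
  by apply: NNPP => H; apply: Hu => s v' E; apply: H; exists s, v'.
pose n : outV (Nt A) g := exist _ (u, tt) (mk u Hu).
have K1 : out_lab n = s1.
  by apply: out_lab_uniq; apply/(Nt_node _ tt); exists y0.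
have Hln : tnth (in_tuple w) (psi n) = s1 by rewrite -K1; exact: (Hl n).
have K2 : (Phi y0 : nat) = (psi n).+1.
  case: (classic (sinkv y0)) => Hy.
    rewrite F3 //=; apply/eqP; rewrite eqn_leq ltn_ord andbT leqNgt; apply/negP => Hlt.
    case: psib => psi' K1' K2'.
    pose n1 := psi' (Ordinal Hlt).
    have : gE (outg (Nt A) g) n tt n1.
      by rewrite -He K2' /=.
    case/out_EP/(Nt_edge _ _ tt tt tt) => s /= E1.
    have [E _] := HU _ _ _ _ _ E0 E1.
    apply: ((Hout (val n1).1 (val n1).2).1 (outbP n1)); by rewrite -E.
  rewrite F2 /=.
  have : gE (outg (Nt A) g) n tt (exist _ (y0, tt) (mk y0 Hy)).
    by apply/out_EP/(Nt_edge _ _ tt tt tt); exists s1.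
  by rewrite -He /= => /eqP.
have Fu : (Phi u : nat) = psi n by rewrite F2.
apply/idP/idP.
  case/ed_E => E1 [H N].
  have Ev : v = y0 by apply: Phi_inj; apply: ord_inj; rewrite E1 K2 Fu.
  have Ea : a = s1.
    rewrite -Hln; apply/(nth_tnth (psi n) a); by rewrite -Fu.
  by rewrite Ev Ea.
move=> E; have [Ev Ea] := HU _ _ _ _ _ E E0; subst v a.
apply/ed_E; split; first by rewrite K2 Fu.
split; first by rewrite Fu ltn_ord.
rewrite Fu; apply/(nth_tnth (psi n) s1); by rewrite Hln.
Qed.

End Strings2.

Section Strings3.
Variable A : finType.

Definition LASTf : mso A unit := MNot (MExN 1 (MEdge A tt 0 1)).

Definition Et : mso_trans A unit unit A :=
  @MsoTrans A unit unit A bool (MTrue _ _)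
    (fun b _ => if b then LASTf else MTrue _ _)
    (fun b b' s => if b then MFalse _ _ else
                   if b' then MAnd (MLab unit s 0) (MEq A unit 0 1)
                   else MAnd (MLab unit s 0) (MEdge A tt 0 1)).

Definition lastv (g : graph A unit) (u : gV g) := forall v, ~ gE g u tt v.

Lemma Et_out (g : graph A unit) u (b : bool) : out_node Et g u b <-> (b -> lastv u).
Proof.
split.
  case=> [[]] [H _]; case: b H => //= H _ v E; apply: H; exists v, u, v.
  by [].
move=> H; exists tt; split; last by case.
case: b H => //= H [v [a [b [[<-] [[<-] E]]]]]; exact: (H isT v E).
Qed.

Lemma Et_edge (g : graph A unit) (u v : gV g) (b b' : bool) s :
  sat2 g u v (edge_f Et b b' s) <->
  (~~ b /\ glab g u = s /\ (if b' then u = v else gE g u tt v)).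
Proof.
case: b; first by split => [/= H|[]] //; case: (H Logic.I).
case: b'; rewrite /sat2 /=; split.
- by case=> [[a [[<-] <-]] [a' [[<-] [<-]]]].
- by case=> _ [<- ->]; split; [exists v | exists v].
- by case=> [[a [[<-] <-]] [a' [b [[<-] [[<-] E]]]]].
- by case=> _ [<- E]; split; [exists u | exists u, v].
Qed.

Lemma Et_outb (g : graph A unit) u : outb (t:=Et) (g:=g) (u, false).
Proof. by apply/pbP/Et_out. Qed.

Lemma nd_last (w : seq A) (i : 'I_(size w)) : lastv (g:=nd w) i <-> i.+1 = size w.
Proof.
split.
  move=> H; apply/eqP; rewrite eqn_leq ltn_ord /= leqNgt; apply/negP => Hlt.
  by apply: (H (Ordinal Hlt)) => /=.
by move=> E v /= /eqP Ev; have := ltn_ord v; rewrite Ev E ltnn.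
Qed.

Definition Emap (w : seq A) (n : outV Et (nd w)) : 'I_(size w).+1 :=
  if (val n).2 then ord_max else widen_ord (leqnSn _) (val n).1.

Lemma iso_E_nd (w : seq A) : w != [::] -> iso (outg Et (nd w)) (ed w).
Proof.
move=> wn; exists (@Emap w); split.
  apply: inj_surj_bij.
    move=> [[i b] Hn] [[i' b'] Hn'] E; apply: val_inj => /=.
    have L := (Et_out _ _).1 (elimT (pbP _) Hn); have L' := (Et_out _ _).1 (elimT (pbP _) Hn').
    move: E; rewrite /Emap /=.
    case: b Hn L => Hn L; case: b' Hn' L' => Hn' L' /(congr1 (fun x : 'I__ => x : nat)) /= E.
    - congr pair; apply: ord_inj; apply: succn_inj.
      by rewrite (nd_last _).1 ?(nd_last _).1 //; [apply: L' | apply: L].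
    - by have := ltn_ord i'; rewrite -E ltnn.
    - by have := ltn_ord i; rewrite E ltnn.
    - by congr pair; apply: ord_inj.
  move=> j; case: (ltnP j (size w)) => Hj.
    exists (exist _ (Ordinal Hj, false) (Et_outb _)).
    by apply: ord_inj.
  have Hw : (size w).-1 < size w by rewrite prednK ?ltnSn // lt0n size_eq0.
  have Hb : outb (t:=Et) (g:=nd w) (Ordinal Hw, true).
    apply/pbP/Et_out => _; apply/nd_last => /=; by rewrite prednK // lt0n size_eq0.
  exists (exist (fun p : (gV (nd w) * bool)%type => outb (t:=Et) (g:=nd w) p) _ Hb).
  apply: ord_inj => /=; apply/eqP.
  by rewrite eqn_leq Hj -ltnS ltn_ord.
split; first by move=> n /=; case: (out_lab n).
move=> [[i b] Hn] s [[i' b'] Hn']; rewrite /Emap /=.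
have L' := (Et_out _ _).1 (elimT (pbP _) Hn').
apply/idP/idP.
- move/ed_E => [E [Hi N]].
  apply/out_EP/Et_edge => /=.
  case: b Hn Hi E N => Hn Hi E N; first by rewrite /= ltnn in Hi.
  split => //; split; first by symmetry; apply/(nth_tnth i s); exact: N.
  case: b' Hn' L' E => Hn' L' /= E.
    apply: ord_inj; apply: succn_inj; rewrite -E; symmetry.
    by apply/nd_last; apply: L'.
  by apply/eqP.
- move/out_EP/Et_edge => /= [nb [Hl H]].
  case: b Hn nb Hl H => // Hn _ Hl H.
  apply/ed_E; split; last first.
    split => //=; apply/(nth_tnth i s); by rewrite -Hl.
  case: b' Hn' L' H => Hn' L' H /=.
    by rewrite H; symmetry; apply/nd_last; apply: L'.
  by apply/eqP.
Qed.

End Strings3.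

Section Strings4.
Variable A : finType.

Lemma iso_nd_of (g : graph A unit) (w : seq A) : iso (outg (Et A) g) (ed w) -> iso (nd w) g.
Proof.
case=> psi [psib [_ He]]; case: (psib) => psi' K1 K2.
have EdgeP (n m : outV (Et A) g) s : gE (outg (Et A) g) n s m <->
   (~~ (val n).2 /\ glab g (val n).1 = s /\
    (if (val m).2 then (val n).1 = (val m).1 else gE g (val n).1 tt (val m).1)).
  by rewrite out_EP Et_edge.
have Hlt (n : outV (Et A) g) : (val n).2 = false <-> psi n < size w.
  split.
    move=> Hf.
    have [m [s E]] : exists m s, gE (outg (Et A) g) n s m.
      case: (classic (exists v, gE g (val n).1 tt v)) => [[v Ev]|Hn].
        exists (exist _ (v, false) (Et_outb v)), (glab g (val n).1).
        by apply/EdgeP; rewrite Hf.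
      have Hb : outb (t:=Et A) (g:=g) ((val n).1, true).
        by apply/pbP/Et_out => _ v Ev; apply: Hn; exists v.
      exists (exist (fun p : (gV g * bool)%type => outb (t:=Et A) (g:=g) p) _ Hb), (glab g (val n).1).
      by apply/EdgeP; rewrite Hf.
    by move: E; rewrite -He => /ed_E [_ [H _]].
  move=> H; apply/negbTE/negP => Ht.
  have H1 : (psi n).+1 < (size w).+1 by [].
  have : gE (ed w) (psi n) (tnth (in_tuple w) (Ordinal H)) (psi (psi' (Ordinal H1))).
    rewrite K2; apply/ed_E; split => //; split => //.
    exact: (esym (tnth_nth _ (in_tuple w) (Ordinal H))).
  by rewrite He => /EdgeP [H0 _]; rewrite Ht in H0.
pose Th (i : 'I_(size w)) := (val (psi' (widen_ord (leqnSn _) i))).1.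
have HT i : (val (psi' (widen_ord (leqnSn _) i))).2 = false.
  by apply/Hlt; rewrite K2 /= ltn_ord.
have HV i : val (psi' (widen_ord (leqnSn _) i)) = (Th i, false).
  by rewrite [LHS]surjective_pairing HT.
exists Th; split.
  apply: inj_surj_bij.
    move=> i j E.
    have : psi' (widen_ord (leqnSn _) i) = psi' (widen_ord (leqnSn _) j).
      by apply: val_inj; rewrite !HV E.
    by move/(congr1 psi); rewrite !K2 => /(congr1 val) /= /ord_inj.
  move=> u; pose n : outV (Et A) g := exist _ (u, false) (Et_outb u).
  have Hn : psi n < size w by apply/Hlt.
  exists (Ordinal Hn); rewrite /Th.
  have -> : widen_ord (leqnSn _) (Ordinal Hn) = psi n by apply: ord_inj.
  by rewrite K1.
split.
  move=> i /=.
  set n := psi' (widen_ord (leqnSn _) i).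
  have [m [s E]] : exists m s, gE (outg (Et A) g) n s m.
    case: (classic (exists v, gE g (val n).1 tt v)) => [[v Ev]|Hn].
      exists (exist _ (v, false) (Et_outb v)), (glab g (val n).1).
      by apply/EdgeP; rewrite HT.
    have Hb : outb (t:=Et A) (g:=g) ((val n).1, true).
      by apply/pbP/Et_out => _ v Ev; apply: Hn; exists v.
    exists (exist (fun p : (gV g * bool)%type => outb (t:=Et A) (g:=g) p) _ Hb), (glab g (val n).1).
    by apply/EdgeP; rewrite HT.
  have [_ [Hl _]] := (EdgeP _ _ _).1 E.
  move: E; rewrite -He K2 => /ed_E [_ [_ N]].
  rewrite /Th -/n Hl; apply/(nth_tnth i s); exact: N.
move=> i [] j /=; apply/idP/idP.
  move=> E.
  have : gE (outg (Et A) g) (psi' (widen_ord (leqnSn _) i)) (glab g (Th i))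
            (psi' (widen_ord (leqnSn _) j)).
    by apply/EdgeP; rewrite !HT.
  by rewrite -He !K2 => /ed_E [Ej _]; apply/eqP.
move=> /eqP Ej.
have : gE (ed w) (widen_ord (leqnSn _) i) (tnth (in_tuple w) i) (widen_ord (leqnSn _) j).
  apply/ed_E; split => //; split => //=.
  exact: (esym (tnth_nth _ (in_tuple w) i)).
rewrite -{1}(K2 (widen_ord _ i)) -{1}(K2 (widen_ord _ j)) He => /EdgeP.
by rewrite !HT => [[_ [_ H]]].
Qed.

End Strings4.

Definition fix0 {S G} (phi : mso S G) := ren (fun n => if n == 0 then 0 else n.+1) id phi.
Definition shift1 {S G} (phi : mso S G) := ren succn id phi.

Lemma fix0_inj : injective (fun n => if n == 0 then 0 else n.+1).
Proof. move=> n m /=; case: eqP; case: eqP; lia. Qed.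

Lemma sat2_fix0 S G (g : graph S G) u v phi : sat2 g u v (fix0 phi) <-> sat1 g u phi.
Proof.
rewrite /sat2 /fix0 (sat_ren fix0_inj (@inj_id nat)) /sat1.
have -> : (fun n => upd (upd (fun _ => None) 0 (Some u)) 1 (Some v)
                      (if n == 0 then 0 else n.+1)) = upd (fun _ => None) 0 (Some u).
  by apply: functional_extensionality => -[|n].
by [].
Qed.

Section Addsink.
Variables (A B : finType) (t2 : mso_trans unit A B unit).

Definition LASTo (c : copies t2) : mso unit A :=
  MNot (MExN 1 (OrF (fun d : copies t2 => MAnd (shift1 (OUTf d)) (edge_f t2 c d tt)))).

Lemma sat2_LASTo g u v c : sat2 g u v (LASTo c) <->
  ~ exists v' d, out_node t2 g v' d /\ sat2 g u v' (edge_f t2 c d tt).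
Proof.
rewrite /sat2 /LASTo /=.
have E1 v' : (fun n => upd (upd (upd (fun _ => None) 0 (Some u)) 1 (Some v)) 1 (Some v') n.+1)
   = upd (fun _ => None) 0 (Some v').
  by apply: functional_extensionality => -[|[|n]].
have E2 v' : upd (upd (upd (fun _ => None) 0 (Some u)) 1 (Some v)) 1 (Some v')
   = upd (upd (fun _ => None) 0 (Some u)) 1 (Some v').
  by apply: functional_extensionality => -[|[|n]].
split => H.
  move=> [v' [d [Ho Hs]]]; apply: H.
  exists v'; apply/sat_OrF; exists d; split.
    rewrite /shift1 (sat_ren (@succn_inj) (@inj_id nat)) E1.
    exact/OUTf_out.
  by rewrite E2.
move=> [v' /sat_OrF [e H2]]; apply: H.
pose en' := upd (upd (upd (fun _ => None) 0 (Some u)) 1 (Some v)) 1 (Some v').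
have [Ho Hs] : sat g en' (fun _ => set0) (shift1 (OUTf e)) /\
               sat g en' (fun _ => set0) (edge_f t2 c e tt) := H2.
move: Ho Hs; rewrite /en' /shift1 (sat_ren (@succn_inj) (@inj_id nat)) E1 E2 => /OUTf_out Ho Hs.
by exists v', e.
Qed.

Definition addsink : mso_trans unit A unit B :=
  @MsoTrans unit A unit B (copies t2 + unit)%type
    (MAnd (PATHed A) (dom_f t2))
    (fun c _ => match c with inl c2 => OUTf c2 | inr _ => SINKf A 0 1 end)
    (fun c d s => match c, d with
                  | inl c2, inl d2 => MAnd (edge_f t2 c2 d2 tt) (fix0 (node_f t2 c2 s))
                  | inl c2, inr _ => MAnd (fix0 (node_f t2 c2 s)) (LASTo c2)
                  | inr _, _ => MFalse _ _
                  end).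

Lemma addsink_dom g : sat0 g (dom_f addsink) <-> sat0 g (PATHed A) /\ sat0 g (dom_f t2).
Proof. by []. Qed.

Lemma addsink_inl g u c : out_node addsink g u (inl c) <-> out_node t2 g u c.
Proof.
split.
  by case=> [[]] [/OUTf_out H _].
by move=> H; exists tt; split; [apply/OUTf_out | case].
Qed.

Lemma addsink_inr g u x : out_node addsink g u (inr x) <-> sinkv u.
Proof.
split.
  by case=> [[]] [/SINK01 H _].
by move=> H; exists tt; split; [apply/SINK01 | case].
Qed.

Lemma addsink_out g (z : seq B) : sat0 g (PATHed A) -> iso (outg t2 g) (nd z) ->
  iso (outg addsink g) (ed z).
Proof.
move=> /PATHed_sat [HU [s0 [HS0 HS]]] [psi [psib [Hl He]]].
have psii := bij_inj psib.
pose Phi (n : outV addsink g) : 'I_(size z).+1 :=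
  if (val n).2 is inl c2 then
    (if (insub ((val n).1, c2) : option (outV t2 g)) is Some m
     then widen_ord (leqnSn _) (psi m) else ord_max)
  else ord_max.
have F2 u c2 (Hn : outb (t:=addsink) (g:=g) (u, inl c2)) :
    exists Hm : outb (t:=t2) (g:=g) (u, c2),
    Phi (exist _ (u, inl c2) Hn) = widen_ord (leqnSn _) (psi (exist _ (u, c2) Hm)).
  have Hm : outb (t:=t2) (g:=g) (u, c2) by apply/pbP; apply/(addsink_inl u c2); apply/pbP.
  by exists Hm; rewrite /Phi /= (insubT _ Hm).
have F3 u x (Hn : outb (t:=addsink) (g:=g) (u, inr x)) :
    Phi (exist _ (u, inr x) Hn) = ord_max by [].
exists Phi; split.
  apply: inj_surj_bij.
    move=> [[u [c2|x]] Hn] [[u' [c2'|x']] Hn']; rewrite ?F3.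
    - have [Hm ->] := F2 _ _ Hn; have [Hm' ->] := F2 _ _ Hn'.
      move=> /(congr1 val) /= /ord_inj /psii /(congr1 val) /= [E1 E2].
      by apply: val_inj => /=; rewrite E1 E2.
    - have [Hm ->] := F2 _ _ Hn => /(congr1 val) /= E.
      by have := ltn_ord (psi (exist _ (u, c2) Hm)); rewrite E ltnn.
    - have [Hm' ->] := F2 _ _ Hn' => /(congr1 val) /= E.
      by have := ltn_ord (psi (exist _ (u', c2') Hm')); rewrite -E ltnn.
    - move=> _; apply: val_inj => /=.
      have Hu : sinkv u := (addsink_inr _ _).1 (elimT (pbP _) Hn).
      have Hu' : sinkv u' := (addsink_inr _ _).1 (elimT (pbP _) Hn').
      by rewrite (HS _ Hu) (HS _ Hu'); case: x {Hn}; case: x' {Hn'}.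
  move=> j; case: (ltnP j (size z)) => Hj.
    case: psib => psi' K1 K2.
    pose m := psi' (Ordinal Hj).
    have Hn : outb (t:=addsink) (g:=g) ((val m).1, inl (val m).2).
      by apply/pbP/addsink_inl/outbP.
    exists (exist (fun p : (gV g * copies addsink)%type => outb (t:=addsink) (g:=g) p) _ Hn).
    have [Hm ->] := F2 _ _ Hn.
    have -> : exist _ ((val m).1, (val m).2) Hm = m.
      by apply: val_inj; rewrite /= -surjective_pairing.
    by apply: ord_inj; rewrite /= K2.
  have Hn : outb (t:=addsink) (g:=g) (s0, inr tt) by apply/pbP/addsink_inr.
  exists (exist (fun p : (gV g * copies addsink)%type => outb (t:=addsink) (g:=g) p) _ Hn).
  rewrite F3; apply: ord_inj => /=; apply/eqP.
  by rewrite eqn_leq Hj -ltnS ltn_ord.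
split; first by move=> n /=; case: (out_lab n).
move=> [[u [c2|x]] Hn] s [[u' [c2'|x']] Hn']; rewrite ?F3.
- have [Hm ->] := F2 _ _ Hn; have [Hm' ->] := F2 _ _ Hn'.
  set m := exist _ (u, c2) Hm; set m' := exist _ (u', c2') Hm'.
  have Hlm : tnth (in_tuple z) (psi m) = out_lab m := Hl m.
  apply/idP/idP.
    move/ed_E => [E [Hi N]]; apply/out_EP => /=; split.
      apply/(out_EP m m' tt); rewrite -He; apply/eqP; exact: E.
    apply/sat2_fix0; have -> : s = out_lab m.
      rewrite -Hlm; exact/(nth_tnth (psi m) s).
    exact: (out_labP m).
  move/out_EP => [Ee /sat2_fix0 Hs].
  have Ls : out_lab m = s := out_lab_uniq (n:=m) Hs.
  apply/ed_E; split.
    by move: ((out_EP m m' tt).2 Ee); rewrite -He => /eqP.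
  split => //=; apply/(nth_tnth (psi m) s); by rewrite Hlm Ls.
- have [Hm ->] := F2 _ _ Hn; set m := exist _ (u, c2) Hm.
  have Hlm : tnth (in_tuple z) (psi m) = out_lab m := Hl m.
  have Hlast : (exists v' d, out_node t2 g v' d /\ sat2 g u v' (edge_f t2 c2 d tt)) <->
               (psi m).+1 < size z.
    split.
      case=> v' [d [Ho Hs]].
      have Hb : outb (t:=t2) (g:=g) (v', d) by apply/pbP.
      have : gE (outg t2 g) m tt (exist _ (v', d) Hb) by apply/out_EP.
      by rewrite -He /= => /eqP <-.
    move=> Hlt; case: psib => psi' K1 K2.
    pose m1 := psi' (Ordinal Hlt).
    have : gE (nd z) (psi m) tt (psi m1) by rewrite /= K2.
    rewrite He => /out_EP Ee.
    by exists (val m1).1, (val m1).2; split => //; exact: outbP.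
  apply/idP/idP.
    move/ed_E => [E [Hi N]]; apply/out_EP => /=; split.
      apply/sat2_fix0; have -> : s = out_lab m.
        rewrite -Hlm; exact/(nth_tnth (psi m) s).
      exact: (out_labP m).
    apply/sat2_LASTo => /Hlast; by rewrite /= -E ltnn.
  move/out_EP => [/sat2_fix0 Hs /sat2_LASTo HL].
  have Ls : out_lab m = s := out_lab_uniq (n:=m) Hs.
  apply/ed_E; split.
    apply/eqP; rewrite /= eqn_leq ltn_ord andbT leqNgt; apply/negP => H.
    by apply: HL; apply/Hlast.
  split => //=; apply/(nth_tnth (psi m) s); by rewrite Hlm Ls.
- apply/idP/idP; first by move/ed_E => [_ [H _]]; rewrite /= ltnn in H.
  by move/out_EP => /= H; case: (H Logic.I).
- apply/idP/idP; first by move/ed_E => [_ [H _]]; rewrite /= ltnn in H.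
  by move/out_EP => /= H; case: (H Logic.I).
Qed.

End Addsink.

Definition withdom S1 G1 S2 G2 (t : mso_trans S1 G1 S2 G2) (d : mso S1 G1) :=
  @MsoTrans S1 G1 S2 G2 (copies t) d (node_f t) (edge_f t).

Lemma withdom_iso S1 G1 S2 G2 (t : mso_trans S1 G1 S2 G2) d g :
  iso (outg (withdom t d) g) (outg t g).
Proof.
have F (n : outV (withdom t d) g) : outb (t:=t) (g:=g) (val n) := valP n.
have F' (n : outV t g) : outb (t:=withdom t d) (g:=g) (val n) := valP n.
exists (fun n => exist _ (val n) (F n)); split.
  exists (fun n => exist _ (val n) (F' n)) => n; exact: val_inj.
split => [n|n a n'] //=.
apply: out_lab_uniq => /=; exact: (out_labP n).
Qed.

Theorem lemma3p9 (S1 S2 : finType) (m : seq S1 -> seq S2 -> Prop) :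
  @mso_definable S1 unit S2 unit (nd_rel m) <->
  (@mso_definable unit S1 unit S2 (ed_rel m) /\
   (forall z, m [::] z -> z = [::])).
Proof.
split.
- case=> t Ht.
  have Heps : forall z, m [::] z -> z = [::].
    move=> z Hz.
    have [_ /is_output_iso [f _]] :=
      (Ht (nd [::]) (nd z)).1 (ex_intro _ [::] (ex_intro _ z (conj Hz (conj (iso_refl _) (iso_refl _))))).
    case: z Hz f => // a z _ f.
    by case: (f ord0) => [[u c] _]; case: u.
  split => //.
  exists (addsink (comp (Nt S1) t)) => g h; split.
  + case=> w [z [Hm [Hg Hh]]].
    have HP : sat0 g (PATHed S1) by apply/(sat0_iso _ Hg); exact: PATHed_ed.
    have HN : iso (outg (Nt S1) g) (nd w).
      exact: iso_trans (out_iso_cong (Nt S1) Hg) (iso_sym (iso_N_ed w)).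
    have [Hd Ho] := (Ht (outg (Nt S1) g) (nd z)).1
      (ex_intro _ w (ex_intro _ z (conj Hm (conj HN (iso_refl _))))).
    split.
      apply/addsink_dom; split => //; apply/comp_dom; split => //.
    apply/is_output_iso.
    have H2 : iso (outg (comp (Nt S1) t) g) (nd z).
      exact: iso_trans (comp_out _ _ g) (iso_sym ((is_output_iso _ _ _).1 Ho)).
    exact: iso_trans Hh (iso_sym (addsink_out HP H2)).
  + case=> /addsink_dom [HP /comp_dom [_ Hd]] Ho.
    have := (Ht (outg (Nt S1) g) (outg t (outg (Nt S1) g))).2
      (conj Hd (is_output_out _ _)).
    case=> w [z [Hm [HN Hz]]].
    exists w, z; split => //; split; first exact: iso_ed_of HP HN.
    have H2 : iso (outg (comp (Nt S1) t) g) (nd z) := iso_trans (comp_out _ _ g) Hz.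
    exact: iso_trans ((is_output_iso _ _ _).1 Ho) (addsink_out HP H2).
- case=> [[t Ht] Heps].
  pose core := comp (comp (Et S1) t) (Nt S2).
  pose EPS : mso S1 unit := if pb (exists z, m [::] z) then MTrue _ _ else MFalse _ _.
  pose EMPTY : mso S1 unit := MNot (MExN 0 (MTrue _ _)).
  pose tnd := withdom core (MOr (MAnd EMPTY EPS) (dom_f core)).
  have HC g : iso (outg core g) (outg (Nt S2) (outg t (outg (Et S1) g))).
    exact: iso_trans (comp_out (comp (Et S1) t) (Nt S2) g)
                     (out_iso_cong (Nt S2) (comp_out (Et S1) t g)).
  have Hdom g : sat0 g (dom_f core) <-> sat0 (outg (Et S1) g) (dom_f t).
    rewrite /core comp_dom comp_dom; split; first by case=> [[_ H] _].
    by move=> H; split; [split|].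
  exists tnd => g h; split.
  + case=> w [z [Hm [Hg Hh]]].
    case: w Hm Hg => [|a w'] Hm Hg.
    * have Hz := Heps z Hm; subst z.
      case: Hg => f _.
      have Eg : gV g -> False by move=> u; case: (f u).
      split.
        left; split; first by case=> u _; apply: Eg u.
        rewrite /EPS; have -> : pb (exists z, m [::] z) = true.
          by apply/pbP; exists [::].
        done.
      apply/is_output_iso; apply: iso_empty.
        by case: Hh => f' _ u; case: (f' u).
      by move=> n; apply: Eg (val n).1.
    * set w := a :: w'.
      have HE : iso (outg (Et S1) g) (ed w).
        exact: iso_trans (out_iso_cong (Et S1) Hg) (iso_E_nd (isT : w != [::])).
      have [Hd Ho] := (Ht (outg (Et S1) g) (ed z)).1
        (ex_intro _ w (ex_intro _ z (conj Hm (conj HE (iso_refl _))))).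
      split; first by right; apply/Hdom.
      apply/is_output_iso; apply: iso_trans _ (iso_sym (withdom_iso _ _ g)).
      apply: iso_trans Hh _; apply: iso_trans (iso_N_ed z) _.
      apply: iso_trans _ (iso_sym (HC g)).
      have X := out_iso_cong (Nt S2) ((is_output_iso t (outg (Et S1) g) (ed z)).1 Ho).
      exact X.
  + case=> [[[HE HP]|Hd] Ho].
    * have Eg : gV g -> False by move=> u; apply: HE; exists u.
      move: HP; rewrite /EPS; case: pbP => [[z Hz] _|_ H]; last by case: (H Logic.I).
      have E := Heps z Hz; subst z.
      exists [::], [::]; split => //; split.
        by apply: iso_empty => // -[].
      apply: iso_trans ((is_output_iso _ _ _).1 Ho) _.
      apply: iso_empty; first by move=> n; apply: Eg (val n).1.
      by case.
    * have Hd' := (Hdom g).1 Hd.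
      have := (Ht (outg (Et S1) g) (outg t (outg (Et S1) g))).2
        (conj Hd' (is_output_out _ _)).
      case=> w [z [Hm [HE Hz]]].
      exists w, z; split => //; split; first exact: iso_sym (iso_nd_of HE).
      apply: iso_trans ((is_output_iso _ _ _).1 Ho) _.
      apply: iso_trans (withdom_iso _ _ g) _.
      apply: iso_trans (HC g) _.
      apply: iso_trans (out_iso_cong (Nt S2) Hz) _.
      exact: iso_sym (iso_N_ed z).
Qed.
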